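(* In the following setting: $\mathcal{W}$ is the weight space of an MLP, $G$ its neuron-permutation group acting orthonormally on $\mathcal{W}$ (see context), $p(\boldsymbol{\omega})$ a $G$-invariant prior density, $p(\mathbf{Y}\mid\mathbf{X},\boldsymbol{\omega})$ a likelihood that is $G$-invariant in $\boldsymbol{\omega}$, $q_\theta$ a variational density on $\mathcal{W}$ with symmetrization $q_\theta^G(\boldsymbol{\omega})=\frac{1}{|G|}\sum_{g\in G}q_\theta(g^{-1}\cdot\boldsymbol{\omega})$, and $$\mathcal{L}_{\mathrm{VI}}(\theta)=\mathbb{E}_{q_\theta}\log p(\mathbf{Y}\mid\mathbf{X},\boldsymbol{\omega})-\mathrm{KL}(q_\theta\|p),\quad \mathcal{L}^G_{\mathrm{VI}}(\theta)=\mathbb{E}_{q^G_\theta}\log p(\mathbf{Y}\mid\mathbf{X},\boldsymbol{\omega})-\mathrm{KL}(q^G_\theta\|p)$$ (all assumed finite). Then for every variational parameter $\theta$, $\mathcal{L}^G_{\mathrm{VI}}(\theta)\ge\mathcal{L}_{\mathrm{VI}}(\theta)$, with equality if and only if $q_\theta$ is $G$-invariant.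
   Context: The MLP weight space is $\mathcal{W}=\bigoplus_{l=1}^L(\mathbb{R}^{d_l\times d_{l-1}}\oplus\mathbb{R}^{d_l})$ with $\boldsymbol{\omega}=(\mathbf{W}_1,\dots,\mathbf{W}_L,\mathbf{b}_1,\dots,\mathbf{b}_L)$ and Euclidean norm, and $G=S_{d_1}\times\dots\times S_{d_{L-1}}$. For $g=(\tau_1,\dots,\tau_{L-1})$ with permutation matrices $\mathbf{P}_{\tau_l}$, $g\cdot\boldsymbol{\omega}$ has $\mathbf{W}_1'=\mathbf{P}_{\tau_1}^\top\mathbf{W}_1$, $\mathbf{b}_1'=\mathbf{P}_{\tau_1}^\top\mathbf{b}_1$; $\mathbf{W}_l'=\mathbf{P}_{\tau_l}^\top\mathbf{W}_l\mathbf{P}_{\tau_{l-1}}$, $\mathbf{b}_l'=\mathbf{P}_{\tau_l}^\top\mathbf{b}_l$ for $2\le l\le L-1$; $\mathbf{W}_L'=\mathbf{W}_L\mathbf{P}_{\tau_{L-1}}$, $\mathbf{b}_L'=\mathbf{b}_L$. A density $h$ is $G$-invariant if $h(g\cdot\boldsymbol{\omega})=h(\boldsymbol{\omega})$ for all $g,\boldsymbol{\omega}$ (densities identified up to null sets). *)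

(* Defs.v *)
From HB Require Import structures.
From mathcomp Require Import all_boot all_order all_algebra all_fingroup.
From mathcomp Require Import all_classical all_reals all_analysis.
Set Implicit Arguments. Unset Strict Implicit. Unset Printing Implicit Defensive.
Import Order.TTheory GRing.Theory Num.Theory.
Local Open Scope ring_scope.
Local Open Scope classical_set_scope.

Section MLP.
Variables (R : realType) (L : nat) (d : nat -> nat).

(* Layers are indexed 0-based: layer l : 'I_L is the paper's layer l+1, with
   weight matrix W_{l+1} : d_{l+1} x d_l and bias b_{l+1} : d_{l+1}. *)

Definition coordI : finType :=
  ({l : 'I_L & ('I_(d l.+1) * 'I_(d l))%type} + {l : 'I_L & 'I_(d l.+1)})%type.

Definition dimW : nat := #|{: coordI}|.

(* The weight space W, as R^dimW (flattened via the enumeration of coordI);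
   it carries the product (Borel) sigma-algebra on tuples. *)
Definition weight_space := (dimW.-tuple R).

Definition coord (w : weight_space) (c : coordI) : R := tnth w (enum_rank c).

Definition Wmat (w : weight_space) (l : 'I_L) : 'M[R]_(d l.+1, d l) :=
  \matrix_(i, j) coord w (inl (existT _ l (i, j))).
Definition bvec (w : weight_space) (l : 'I_L) : 'cV[R]_(d l.+1) :=
  \col_i coord w (inr (existT _ l i)).

Definition pack (Ws : forall l : 'I_L, 'M[R]_(d l.+1, d l))
  (bs : forall l : 'I_L, 'cV[R]_(d l.+1)) : weight_space :=
  [tuple match enum_val i with
         | inl (existT l (a, b)) => Ws l a b
         | inr (existT l a) => bs l a ord0
         end | i < dimW].

(* G = S_{d_1} x ... x S_{d_{L-1}}; component k : 'I_L.-1 is tau_{k+1}. *)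
Definition group_G : finType := {dffun forall k : 'I_L.-1, {perm 'I_(d k.+1)}}.

(* tau_k for 1 <= k <= L-1, and the identity permutation for k = 0 or k >= L
   (this encodes the special form of the action on the first/last layers). *)
Definition permk (g : group_G) (k : nat) : {perm 'I_(d k)} :=
  match k with
  | 0 => 1%g
  | k'.+1 =>
    match (k' < L.-1)%N as b return (k' < L.-1)%N = b -> {perm 'I_(d k'.+1)} with
    | true => fun h => g (Ordinal h)
    | false => fun _ => 1%g
    end erefl
  end.

(* permutation matrix P_tau, (P_tau) i j = [tau i == j] *)
Definition Pmat (g : group_G) (k : nat) : 'M[R]_(d k) := perm_mx (permk g k).

Definition mlp_act (g : group_G) (w : weight_space) : weight_space :=
  pack (fun l => (Pmat g l.+1)^T *m Wmat w l *m Pmat g l)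
       (fun l => (Pmat g l.+1)^T *m bvec w l).

Definition ginv (g : group_G) : group_G := finfun (fun k => ((g k)^-1)%g).

Definition symmetrize (q : weight_space -> R) (w : weight_space) : R :=
  (#|{: group_G}|%:R)^-1 * \sum_(g : group_G) q (mlp_act (ginv g) w).

Variable (mu : set weight_space -> \bar R).

Definition is_lebesgue : Prop :=
  forall a b : weight_space, (forall i, tnth a i <= tnth b i) ->
    mu [set x | forall i, tnth a i <= tnth x i < tnth b i] =
    ((\prod_(i < dimW) (tnth b i - tnth a i))%:E).

End MLP.

Section Densities.
Variables (R : realType) (L : nat) (d : nat -> nat).
Local Notation W := (weight_space R L d).
Variable (mu : {measure set W -> \bar R}).

Definition is_density (f : W -> R) : Prop :=
  [/\ measurable_fun setT f, (forall w, 0 <= f w) &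
      (\int[mu]_w (f w)%:E = 1)%E].

Definition G_invariant (f : W -> R) : Prop :=
  forall g : group_G L d, {ae mu, forall w, f (mlp_act g w) = f w}.

Definition elog (x : R) : \bar R := if 0 < x then (ln x)%:E else -oo%E.

Definition klterm (a b : R) : \bar R :=
  if a == 0 then 0%E else if b == 0 then +oo%E else (a * ln (a / b))%:E.

Definition expected_loglik (lik q : W -> R) : \bar R :=
  (\int[mu]_w ((q w)%:E * elog (lik w)))%E.

Definition KL (q p : W -> R) : \bar R := (\int[mu]_w klterm (q w) (p w))%E.

Definition elbo (lik prior q : W -> R) : \bar R :=
  (expected_loglik lik q - KL q prior)%E.

End Densities.

(* Main.v *)
Require Import Defs.
From HB Require Import structures.
From mathcomp Require Import all_boot all_order all_algebra all_fingroup.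
From mathcomp Require Import all_classical all_reals all_analysis.
From mathcomp Require Import measurable_realfun.
From mathcomp Require Import ring lra.
Import Order.TTheory GRing.Theory Num.Theory.
Local Open Scope ring_scope.
Local Open Scope classical_set_scope.
Set Implicit Arguments. Unset Strict Implicit. Unset Printing Implicit Defensive.

Section tuple_perm.
Variables (R : realType) (n : nat).
Local Notation T := (n.-tuple R).

Definition ptup (s : {perm 'I_n}) (w : T) : T := [tuple tnth w (s i) | i < n].

Lemma tnth_ptup s w i : tnth (ptup s w) i = tnth w (s i).
Proof. by rewrite tnth_mktuple. Qed.

Lemma measurable_ptup s : measurable_fun setT (ptup s).
Proof.
apply/measurable_fun_tnthP => i.
rewrite (_ : _ \o _ = (@tnth _ R ^~ (s i))); first exact: measurable_tnth.
by apply/funext => w /=; rewrite tnth_ptup.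
Qed.

Definition box (a b : T) : set T :=
  [set x | forall i, tnth a i <= tnth x i < tnth b i].
Definition boxes : set (set T) := [set B | exists a b, B = box a b].

Lemma box_measurable a b : measurable (box a b).
Proof.
have -> : box a b = \bigcap_(i in [set: 'I_n])
    ((@tnth _ R ^~ i) @^-1` `[tnth a i, tnth b i[).
  apply/seteqP; split => x /=.
    by move=> H i _; rewrite /= in_itv; exact: H.
  by move=> H i; have := H i I; rewrite /= in_itv.
apply: fin_bigcap_measurable => // i _.
rewrite -[X in measurable X]setTI.
by apply: measurable_tnth => //; exact: measurable_itv.
Qed.

Lemma boxI a b a' b' : box a b `&` box a' b' =
  box [tuple Num.max (tnth a i) (tnth a' i) | i < n]
      [tuple Num.min (tnth b i) (tnth b' i) | i < n].
Proof.
apply/seteqP; split => x /=.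
  move=> [H1 H2] i; rewrite !tnth_mktuple ge_max lt_min.
  by case/andP: (H1 i) => -> ->; case/andP: (H2 i) => -> ->.
move=> H; split => i; have := H i; rewrite !tnth_mktuple ge_max lt_min;
  by case/andP => /andP[? ?] /andP[? ?]; apply/andP.
Qed.

Lemma ptup_box s a b : ptup s @^-1` box a b = box (ptup (s^-1)%g a) (ptup (s^-1)%g b).
Proof.
apply/seteqP; split => x /=.
  move=> H j; rewrite !tnth_ptup; have := H ((s^-1)%g j); by rewrite tnth_ptup permKV.
move=> H i; rewrite tnth_ptup; have := H (s i); by rewrite !tnth_ptup permK.
Qed.

Variable mu : {measure set T -> \bar R}.
Hypothesis mu_leb : forall a b : T, (forall i, tnth a i <= tnth b i) ->
    mu (box a b) = ((\prod_(i < n) (tnth b i - tnth a i))%:E).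

Lemma mu_box_perm s a b : mu (box (ptup s a) (ptup s b)) = mu (box a b).
Proof.
have [H|H] := pselect (forall i, tnth a i <= tnth b i).
  rewrite !mu_leb //; last by move=> i; rewrite !tnth_ptup.
  congr EFin; rewrite [RHS](reindex_inj (@perm_inj _ s)) /=.
  by apply: eq_bigr => i _; rewrite !tnth_ptup.
have [i Hi] : exists i, ~ (tnth a i <= tnth b i).
  by apply: contrapT => hn; apply: H => i; apply: contrapT => hi; apply: hn; exists i.
have E1 : box a b = set0.
  apply/seteqP; split => // x /= /(_ i) /andP[h1 h2]; apply: Hi.
  exact: (le_trans h1 (ltW h2)).
have E2 : box (ptup s a) (ptup s b) = set0.
  apply/seteqP; split => // x /= /(_ ((s^-1)%g i)) /andP[h1 h2]; apply: Hi.
  move: h1 h2; rewrite !tnth_ptup permKV => h1 h2.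
  exact: (le_trans h1 (ltW h2)).
by rewrite E1 E2.
Qed.

Definition cbox (k : nat) : set T :=
  box [tuple - (k%:R) | i < n] [tuple (k%:R) | i < n].

Lemma norm_le_sum (y : T) j : `|tnth y j| <= \sum_(i < n) `|tnth y i|.
Proof.
rewrite (bigD1 j) //= lerDl; apply: sumr_ge0 => i _; exact: normr_ge0.
Qed.

Lemma cbox_cover : \bigcup_k cbox k = setT.
Proof.
apply/seteqP; split => // y _.
set S := \sum_(i < n) `|tnth y i|.
have S0 : 0 <= S by apply: sumr_ge0 => i _; exact: normr_ge0.
exists (Num.Def.archi_bound S) => //= i; rewrite !tnth_mktuple.
have h := archi_boundP S0; have := norm_le_sum y i; rewrite -/S => hi.
have hlt : `|tnth y i| < (Num.Def.archi_bound S)%:R by exact: (le_lt_trans hi h).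
by move: hlt; rewrite ltr_norml => /andP[h1 h2]; rewrite (ltW h1) h2.
Qed.

Lemma tuple_meas_sub E : measurable E -> <<s boxes >> E.
Proof.
move=> mE.
have : <<s \big[setU/set0]_(i < n) preimage_set_system setT
       (fun x : T => tnth x i) measurable >> E := mE.
apply: smallest_sub; first exact: smallest_sigma_algebra.
apply: (big_ind (fun S => S `<=` <<s boxes >>)) => //.
  by move=> A B HA HB; rewrite subUset.
move=> i _ A [B mB <-].
pose S := image_set_system setT (fun x : T => tnth x i) <<s boxes >>.
have sS : sigma_algebra setT S.
  exact/sigma_algebra_image/smallest_sigma_algebra.
have GS : @measurable_realfun.RGenCInfty.G R `<=` S.
  move=> _ [x ->]; rewrite /S /image_set_system /=.
  pose a k : T := [tuple if j == i then x else - (k%:R) | j < n].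
  pose b k : T := [tuple if j == i then x + k%:R else k%:R | j < n].
  have -> : setT `&` (fun x0 : T => tnth x0 i) @^-1` `[x, +oo[ =
      \bigcup_k box (a k) (b k).
    apply/seteqP; split => y /=.
      move=> [_]; rewrite /= in_itv /= andbT => hy.
      set S0 := \sum_(j < n) `|tnth y j| + `|x|.
      have S0p : 0 <= S0 by rewrite addr_ge0 // sumr_ge0 // => j _.
      exists (Num.Def.archi_bound S0) => // j; rewrite !tnth_mktuple.
      have h := archi_boundP S0p.
      have hj : `|tnth y j| < (Num.Def.archi_bound S0)%:R.
        apply: le_lt_trans h; rewrite /S0 (le_trans (norm_le_sum y j)) //.
        by rewrite lerDl.
      case: eqP => [->|_].
        rewrite hy /= -ltrBlDl; apply: le_lt_trans h.
        rewrite /S0 (le_trans (ler_norm _)) // (le_trans (ler_normB _ _)) //.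
        by rewrite lerD2r norm_le_sum.
      by move: hj; rewrite ltr_norml => /andP[h1 h2]; rewrite (ltW h1) h2.
    move=> [k _ /(_ i)]; rewrite !tnth_mktuple eqxx => /andP[h _].
    by split => //; rewrite /= in_itv /= h.
  have [_ _ hU] := smallest_sigma_algebra setT boxes.
  apply: hU => k; apply: sub_sigma_algebra; by exists (a k), (b k).
have mB' : <<s @measurable_realfun.RGenCInfty.G R >> B.
  have E0 := @measurable_realfun.RGenCInfty.measurableE R.
  have HH := f_equal (fun S => S B) E0; simpl in HH.
  exact (eq_ind _ (fun P : Prop => P) mB _ HH).
exact: (smallest_sub sS GS mB').
Qed.

Lemma mu_ptup s A : measurable A -> mu (ptup s @^-1` A) = mu A.
Proof.
move=> mA.
have mf := measurable_ptup s.
have Gm : boxes `<=` measurable by move=> _ [a [b ->]]; exact: box_measurable.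
have Gg : forall k, boxes (cbox k) by move=> k; rewrite /cbox; do 2 eexists.
apply: (@g_sigma_algebra_measure_unique _ R T boxes Gm cbox Gg cbox_cover
  (pushforward mu (ptup s)) mu).
all: try (exact mf).
- by move=> ? ? [a [b ->]] [a' [b' ->]]; rewrite boxI; do 2 eexists.
- move=> _ [a [b ->]]; change (mu (ptup s @^-1` box a b) = mu (box a b)).
  rewrite -[RHS](mu_box_perm (s^-1)%g); congr (mu _); exact: ptup_box.
- move=> k; change (mu (ptup s @^-1` cbox k) < +oo)%E; rewrite /cbox.
  have -> : mu (ptup s @^-1` box [tuple - (k%:R) | _ < n] [tuple k%:R | _ < n]) =
    mu (box (ptup (s^-1)%g [tuple - (k%:R) | _ < n]) (ptup (s^-1)%g [tuple k%:R | _ < n])).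
    by congr (mu _); exact: ptup_box.
  rewrite mu_leb; first exact: ltry.
  move=> i; rewrite !tnth_ptup !tnth_mktuple; apply: (@le_trans _ _ 0); rewrite ?oppr_le0 ?ler0n //. 
- exact: tuple_meas_sub.
Qed.
End tuple_perm.


Section group_part.
Variables (R : realType) (L : nat) (d : nat -> nat).
Local Notation W := ((dimW L d).-tuple R).
Local Notation CI := (coordI L d).

Lemma perm_entry m k (s : {perm 'I_m}) (t : {perm 'I_k}) (M : 'M[R]_(m, k)) a b :
  ((perm_mx s)^T *m M *m perm_mx t) a b = M ((s^-1)%g a) ((t^-1)%g b).
Proof.
rewrite tr_perm_mx -row_permE -[perm_mx t](congr1 perm_mx (invgK t)) -col_permE.
by rewrite !mxE.
Qed.

Lemma perm_entry_v m (s : {perm 'I_m}) (v : 'cV[R]_m) a :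
  ((perm_mx s)^T *m v) a ord0 = v ((s^-1)%g a) ord0.
Proof. by rewrite tr_perm_mx -row_permE mxE. Qed.

Definition fco (g : group_G L d) (c : CI) : CI :=
  match c with
  | inl (existT l (a, b)) =>
      inl (existT _ l (((permk g l.+1)^-1)%g a, ((permk g l)^-1)%g b))
  | inr (existT l a) => inr (existT _ l (((permk g l.+1)^-1)%g a))
  end.

Definition fco' (g : group_G L d) (c : CI) : CI :=
  match c with
  | inl (existT l (a, b)) =>
      inl (existT _ l ((permk g l.+1) a, (permk g l) b))
  | inr (existT l a) => inr (existT _ l ((permk g l.+1) a))
  end.

Lemma fcoK g : cancel (fco g) (fco' g).
Proof. by case=> [[l [a b]]|[l a]] /=; rewrite !permKV. Qed.

Lemma tnth_mlp_act g (w : W) i :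
  tnth (mlp_act g w : W) i = Defs.coord w (fco g (enum_val i)).
Proof.
rewrite /mlp_act /pack tnth_mktuple.
case: (enum_val i) => [[l [a b]]|[l a]] /=.
  by rewrite /Pmat perm_entry mxE.
by rewrite /Pmat perm_entry_v mxE.
Qed.

Definition sigf (g : group_G L d) (i : 'I_(dimW L d)) : 'I_(dimW L d) :=
  enum_rank (fco g (enum_val i)).

Lemma sigf_inj g : injective (sigf g).
Proof.
move=> i j /(congr1 enum_val); rewrite /sigf !enum_rankK.
by move/(congr1 (fco' g)); rewrite !fcoK; exact: enum_val_inj.
Qed.

Definition sigma_g g : {perm 'I_(dimW L d)} := perm (@sigf_inj g).

Lemma mlp_act_ptup g (w : W) : mlp_act g w = ptup (sigma_g g) w.
Proof.
apply: eq_from_tnth => i; rewrite tnth_ptup tnth_mlp_act /sigma_g permE.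
by rewrite /sigf /coord.
Qed.

Definition g1 : group_G L d := finfun (fun k => 1%g).

Lemma permk1 (g : group_G L d) : (forall k, g k = 1%g) -> forall k, permk g k = 1%g.
Proof.
move=> Hg [|k] //=.
have H : forall b (e : (k < L.-1)%N = b),
  (match b as b0 return ((k < L.-1)%N = b0 -> {perm 'I_(d k.+1)}) with
   | true => fun h => g (Ordinal h) | false => fun _ => 1%g end e) = 1%g.
  by case => e //=; exact (Hg (Ordinal e)).
exact: (H _ erefl).
Qed.

Lemma mlp_act_ginv_g1 (w : W) : mlp_act (ginv g1) w = w.
Proof.
apply: eq_from_tnth => i; rewrite tnth_mlp_act.
have P1 : forall k, permk (ginv g1) k = 1%g.
  by apply: permk1 => k; rewrite /ginv /g1 !ffunE invg1.
have -> : fco (ginv g1) (enum_val i) = enum_val i.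
  by case: (enum_val i) => [[l [a b]]|[l a]]; rewrite /fco; cbv beta iota; rewrite !P1 !invg1 !perm1.
by rewrite /Defs.coord enum_valK.
Qed.

Lemma ginvK (g : group_G L d) : ginv (ginv g) = g.
Proof. by apply/ffunP => k; rewrite /ginv !ffunE invgK. Qed.

End group_part.


Section realpart.
Variable R : realType.

Lemma core_ineq (m a b : R) : 0 < m -> 0 < b -> 0 <= a ->
  (0 <= a * ln (a / b) - a * ln (m / b) - a + m) /\
  (a * ln (a / b) - a * ln (m / b) - a + m = 0 -> a = m).
Proof.
move=> m0 b0 a0.
have [->|apos] := eqVneq a 0.
  rewrite !mul0r; split; first lra.
  move=> h; lra.
have a0' : 0 < a by rewrite lt_neqAle eq_sym apos a0.
set t := m / a.
have t0 : 0 < t by rewrite divr_gt0.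
have E : a * ln (a / b) - a * ln (m / b) - a + m = a * (t - 1 - ln t).
  have ht : ln t = ln m - ln a by rewrite /t ln_div ?posrE.
  have hat : a * t = m by rewrite /t mulrCA mulfV ?mulr1 // gt_eqF.
  rewrite ht !ln_div ?posrE // !mulrBr hat mulr1; lra.
have key1 : ln t <= t - 1.
  have := expR_ge1Dx (ln t); rewrite lnK ?posrE // => h; lra.
rewrite E; split.
  by apply: mulr_ge0 => //; lra.
move/eqP; rewrite mulf_eq0 (negbTE apos) /= => /eqP h.
have [t1|tn1] := eqVneq t 1.
  by move: t1; rewrite /t => /(congr1 (fun x => x * a)); rewrite divfK ?gt_eqF // mul1r => ->.
have : ln t != 0 by rewrite ln_eq0.
move/expR_gt1Dx; rewrite lnK ?posrE // => h'; lra.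
Qed.

Variable I : finType.
Variable i0 : I.
Let N := #|{: I}|.
Let c : R := (N%:R)^-1.

Lemma N_gt0 : (0 < N)%N.
Proof. by apply/card_gt0P; exists i0. Qed.

Lemma c_gt0 : 0 < c.
Proof. by rewrite invr_gt0 ltr0n N_gt0. Qed.

Lemma Nr_neq0 : (N%:R : R) != 0.
Proof. by rewrite pnatr_eq0 -lt0n N_gt0. Qed.

Lemma c_neq0 : c != 0.
Proof. exact: lt0r_neq0 c_gt0. Qed.

Lemma avgr_const (x : R) : c * \sum_(i : I) x = x.
Proof.
by rewrite sumr_const -mulr_natl mulrA mulVf ?mul1r // Nr_neq0.
Qed.

Lemma avge_const (x : \bar R) : x \is a fin_num -> (c%:E * \sum_(i : I) x = x)%E.
Proof.
move=> fx; rewrite -(fineK fx) sumEFin -EFinM avgr_const //.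
Qed.

Lemma jensen (b : R) (a : I -> R) : 0 < b -> (forall i, 0 <= a i) ->
  let m := c * \sum_i a i in
  (m * ln (m / b) <= c * \sum_i (a i * ln (a i / b))) /\
  (m * ln (m / b) = c * \sum_i (a i * ln (a i / b)) -> forall i, a i = m).
Proof.
move=> b0 a0 m.
have m0 : 0 <= m by rewrite mulr_ge0 ?sumr_ge0 // ltW // c_gt0.
have [mz|mpos] := eqVneq m 0.
  have S0 : \sum_i a i = 0.
    by move: mz; rewrite /m => /eqP; rewrite mulf_eq0 (negbTE c_neq0) /= => /eqP.
  have ai0 i : a i = 0 by apply: (psumr_eq0P (fun i _ => a0 i) S0).
  have -> : \sum_i (a i * ln (a i / b)) = 0 by apply: big1 => i _; rewrite ai0 mul0r.
  rewrite mz mul0r mulr0; split => // _ i; exact: ai0.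
have mp : 0 < m by rewrite lt_neqAle eq_sym mpos m0.
pose E i := a i * ln (a i / b) - a i * ln (m / b) - a i + m.
have SA : \sum_i a i = N%:R * m.
  by rewrite /m mulrA mulfV ?mul1r // Nr_neq0.
clearbody m.
have SE : \sum_i E i = \sum_i (a i * ln (a i / b)) - N%:R * (m * ln (m / b)).
  rewrite /E !big_split /= !sumrN -mulr_suml SA sumr_const -mulr_natl.
  lra.
have cE : c * \sum_i (a i * ln (a i / b)) - m * ln (m / b) = c * \sum_i E i.
  have cN : c * N%:R = 1 by rewrite /c mulVf // Nr_neq0.
  by rewrite SE mulrBr !mulrA cN mul1r.
have E0 i : 0 <= E i by have [] := core_ineq mp b0 (a0 i).
have SE0 : 0 <= c * \sum_i E i by rewrite mulr_ge0 ?sumr_ge0 // ltW // c_gt0.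
split.
  by rewrite -subr_ge0 cE.
move=> heq i.
have : c * \sum_i E i = 0 by rewrite -cE heq subrr.
move/eqP; rewrite mulf_eq0 (negbTE c_neq0) /= => /eqP hs.
have := psumr_eq0P (fun i _ => E0 i) hs (i:=i) isT.
move=> Ei; have [_ H] := core_ineq mp b0 (a0 i); exact: H.
Qed.

Local Open Scope ereal_scope.

Lemma klterm_pos (a b : R) : (0 < b)%R -> klterm a b = (a * ln (a / b))%:E.
Proof.
move=> b0; rewrite /klterm; case: eqP => [->|_]; first by rewrite mul0r.
by rewrite gt_eqF.
Qed.

Lemma klterm_ge0_0 (a : R) : 0 <= klterm a 0.
Proof. by rewrite /klterm; case: eqP => //; rewrite eqxx. Qed.

Lemma klterm_neq0_0 (a : R) : a != 0%R -> klterm a 0 = +oo.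
Proof. by rewrite /klterm => /negbTE ->; rewrite eqxx. Qed.

Lemma J_le (b : R) (a : I -> R) : (0 <= b)%R -> (forall i, 0 <= a i)%R ->
  klterm (c * \sum_i a i) b <= c%:E * \sum_i klterm (a i) b.
Proof.
move=> b0 a0.
have [bz|bp] := eqVneq b 0%R.
  rewrite bz.
  have [mz|mnz] := eqVneq (c * \sum_i a i)%R 0%R.
    rewrite mz /klterm eqxx; apply: mule_ge0; first by rewrite lee_fin ltW // c_gt0.
    by apply: sume_ge0 => i _; case: ifP => _; [exact: lexx | exact: leey].
  have [j aj] : exists j, a j != 0%R.
    apply: contrapT => hn; move: mnz; rewrite big1 ?mulr0 ?eqxx // => i _.
    by apply/eqP; apply: contrapT => hi; apply: hn; exists i; exact/negP.
  rewrite (klterm_neq0_0 mnz) [X in _ <= c%:E * X](bigD1 j) //= klterm_neq0_0 // addye; last first.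
    rewrite gt_eqF // (lt_le_trans _ (sume_ge0 _ _)) ?ltNyr //.
    by move=> i _; exact: klterm_ge0_0.
  by rewrite muleC gt0_mulye ?leey // lte_fin c_gt0.
have bp' : (0 < b)%R by rewrite lt_neqAle eq_sym bp b0.
rewrite klterm_pos //.
rewrite (eq_bigr (fun i => (a i * ln (a i / b))%:E)); last by move=> i _; rewrite klterm_pos.
rewrite sumEFin -EFinM lee_fin.
by have [] := jensen bp' a0.
Qed.

Lemma J_eq (b : R) (a : I -> R) : (0 <= b)%R -> (forall i, 0 <= a i)%R ->
  \sum_i klterm (a i) b \is a fin_num ->
  c%:E * \sum_i klterm (a i) b - klterm (c * \sum_i a i) b = 0 ->
  forall i, a i = (c * \sum_i a i)%R.
Proof.
move=> b0 a0 fS.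
have [bz|bp] := eqVneq b 0%R.
  move=> _; move: fS; rewrite bz => fS.
  have ai0 i : a i = 0%R.
    apply/eqP; apply: contraTT fS => ai.
    rewrite (bigD1 i) //= klterm_neq0_0 // addye //.
    rewrite gt_eqF // (lt_le_trans _ (sume_ge0 _ _)) ?ltNyr //.
    by move=> k _; exact: klterm_ge0_0.
  by move=> i; rewrite big1 ?mulr0 // => k _; rewrite ai0.
have bp' : (0 < b)%R by rewrite lt_neqAle eq_sym bp b0.
rewrite klterm_pos //.
rewrite (eq_bigr (fun i => (a i * ln (a i / b))%:E)); last by move=> i _; rewrite klterm_pos.
rewrite sumEFin -EFinM -EFinB => /eqP; rewrite eqe subr_eq0 => /eqP h.
by have [_ H] := jensen bp' a0; apply: H; rewrite h.
Qed.

End realpart.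


Section abstract.
Context (dd : measure_display) (T : measurableType dd) (R : realType).
Variable mu : {measure set T -> \bar R}.
Variables (I : finType) (h : I -> T -> T) (i0 : I).
Hypothesis mh : forall i, measurable_fun setT (h i).
Hypothesis muh : forall i A, measurable A -> mu (h i @^-1` A) = mu A.

Local Open Scope ereal_scope.

Lemma cv_ge0 (i : I) (f : T -> \bar R) : measurable_fun setT f -> (forall x, 0 <= f x) ->
  \int[mu]_x f (h i x) = \int[mu]_x f x.
Proof.
move=> mf f0.
have := ge0_integral_pushforward (mh i) mu measurableT mf (fun y _ => f0 y).
rewrite preimage_setT => <-.
apply: eq_measure_integral => A mA _ /=.
by rewrite /pushforward muh.
Qed.

Lemma cv_int (i : I) (f : T -> \bar R) : mu.-integrable setT f ->
  mu.-integrable setT (fun x => f (h i x)) /\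
  \int[mu]_x f (h i x) = \int[mu]_x f x.
Proof.
move=> intf; have mf := measurable_int mu intf.
have intfh : mu.-integrable setT (fun x => f (h i x)).
  apply/integrableP; split; first exact: measurableT_comp.
  rewrite (cv_ge0 i (f := fun x => `|f x|)) //; last exact: measurableT_comp.
  by have [] := integrableP _ _ _ intf.
split => //.
have := integral_pushforward (mh i) mf (D := setT) _ measurableT.
rewrite preimage_setT => <- //.
apply: eq_measure_integral => A mA _ /=.
by rewrite /pushforward muh.
Qed.

Lemma cv_ae (i : I) (P : T -> Prop) : {ae mu, forall x, P x} -> {ae mu, forall x, P (h i x)}.
Proof.
case=> N [mN N0 sN]; exists (h i @^-1` N); split.
- by rewrite -[X in measurable X]setTI; exact: mh.
- by rewrite muh.
- by move=> x /= nP; apply: sN.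
Qed.


Variables (p lik q : T -> R).
Hypothesis hi0 : forall w, h i0 w = w.
Hypothesis mp : measurable_fun setT p.
Hypothesis p0 : forall w, (0 <= p w)%R.
Hypothesis pinv : forall i, {ae mu, forall w, p (h i w) = p w}.
Hypothesis liki : forall i w, lik (h i w) = lik w.
Hypothesis mq : measurable_fun setT q.
Hypothesis q0 : forall w, (0 <= q w)%R.
Hypothesis int1 : mu.-integrable setT (fun w => (q w)%:E * elog (lik w)).
Hypothesis int2 : mu.-integrable setT (fun w => klterm (q w) (p w)).
Hypothesis int4 : mu.-integrable setT
  (fun w => klterm ((#|{: I}|%:R)^-1 * \sum_(i : I) q (h i w))%R (p w)).

Let c : R := (#|{: I}|%:R)^-1.
Let Q w := (c * \sum_(i : I) q (h i w))%R.

Lemma mklterm (f g : T -> R) : measurable_fun setT f -> measurable_fun setT g ->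
  (forall x, 0 <= f x)%R -> (forall x, 0 <= g x)%R ->
  measurable_fun setT (fun x => klterm (f x) (g x)).
Proof.
move=> mf mg f0 g0.
have -> : (fun x => klterm (f x) (g x)) = (fun x => if f x == 0%R then 0
   else if g x == 0%R then +oo else ((f x * (ln (f x) - ln (g x)))%:E)).
  apply/funext => x; rewrite /klterm; case: eqP => // /eqP fx; case: eqP => // /eqP gx.
  rewrite ln_div // posrE lt_neqAle eq_sym ?fx ?gx ?f0 ?g0 //.
apply: measurable_fun_ifT.
- exact: measurable_fun_eqr mf (measurable_cst _).
- exact: measurable_cst.
apply: measurable_fun_ifT.
- exact: measurable_fun_eqr mg (measurable_cst _).
- exact: measurable_cst.
apply/measurable_EFinP; apply: measurable_funM => //.
by apply: measurable_funB; apply: measurableT_comp => //; exact: measurable_ln.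
Qed.

Lemma E_eq : \int[mu]_w ((Q w)%:E * elog (lik w)) =
  \int[mu]_w ((q w)%:E * elog (lik w)).
Proof.
pose F w := (q w)%:E * elog (lik w).
have Fi i : (fun w => (q (h i w))%:E * elog (lik w)) = (fun w => F (h i w)).
  by apply/funext => w; rewrite /F liki.
have intFi i : mu.-integrable setT (fun w => (q (h i w))%:E * elog (lik w)).
  by rewrite Fi; have [] := cv_int i int1.
have eq1 : (fun w => (Q w)%:E * elog (lik w)) =
    (fun w => c%:E * \sum_(i : I) ((q (h i w))%:E * elog (lik w))).
  apply/funext => w; rewrite /Q EFinM -muleA -sumEFin ge0_sume_distrl //.
  by move=> i _; rewrite lee_fin.
rewrite eq1 integralZl //; last exact: integrable_sum.
rewrite integral_sum //.
rewrite (eq_bigr (fun _ => \int[mu]_w F w)); last first.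
  by move=> i _; rewrite Fi; have [] := cv_int i int1.
by rewrite avge_const //; exact: integrable_fin_num.
Qed.

Let k w := klterm (q w) (p w).
Let Kf i w := klterm (q (h i w)) (p w).
Let K w := klterm (Q w) (p w).

Lemma mKf i : measurable_fun setT (Kf i).
Proof. by apply: mklterm => //; exact: measurableT_comp. Qed.

Lemma aeKf i : ae_eq mu setT (Kf i) (fun w => k (h i w)).
Proof. by apply: filterS (pinv i) => w hw _; rewrite /Kf /k hw. Qed.

Lemma intKf i : mu.-integrable setT (Kf i) /\ \int[mu]_w Kf i w = \int[mu]_w k w.
Proof.
have mk : measurable_fun setT k := measurable_int mu int2.
have mkh : measurable_fun setT (fun w => k (h i w)) by exact: measurableT_comp.
split.
  apply/integrableP; split; first exact: mKf.
  have -> : \int[mu]_w `|Kf i w| = \int[mu]_w `|k (h i w)|.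
    apply: ge0_ae_eq_integral => //.
    - by apply: measurableT_comp => //; exact: mKf.
    - exact: measurableT_comp.
    - by apply: filterS (aeKf i) => w hw /hw ->.
  rewrite (cv_ge0 i (f := fun x => `|k x|)) //; last exact: measurableT_comp.
  by have [] := integrableP _ _ _ int2.
rewrite (ae_eq_integral (fun w => k (h i w))) //; try exact: mKf; try exact: aeKf.
by have [] := cv_int i int2.
Qed.

Let S w := \sum_(i : I) Kf i w.

Lemma intS : mu.-integrable setT S.
Proof. exact: (integrable_sum measurableT _ (fun i _ => (intKf i).1)). Qed.

Lemma intcS : mu.-integrable setT (fun w => c%:E * S w).
Proof. exact: integrableZl intS. Qed.

Lemma intcS_val : \int[mu]_w (c%:E * S w) = \int[mu]_w k w.
Proof.
rewrite integralZl //; last exact: intS.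
rewrite /S integral_sum //; last by move=> i; have [] := intKf i.
rewrite (eq_bigr (fun _ => \int[mu]_w k w)); last by move=> i _; have [] := intKf i.
by rewrite avge_const //; exact: integrable_fin_num.
Qed.

Lemma Kle w : K w <= c%:E * S w.
Proof. exact: (J_le i0 (p0 w) (fun i => q0 (h i w))). Qed.

Lemma KL_le : \int[mu]_w K w <= \int[mu]_w k w.
Proof.
rewrite -intcS_val; apply: le_integral => //; first exact: intcS.
by move=> w _; exact: Kle.
Qed.


Lemma KL_eq_inv : \int[mu]_w K w = \int[mu]_w k w ->
  forall i, {ae mu, forall w, q (h i w) = q w}.
Proof.
move=> Heq.
pose D w := c%:E * S w - K w.
have intD : mu.-integrable setT D by exact: integrableB intcS int4.
have mD : measurable_fun setT D := measurable_int mu intD.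
have fink : \int[mu]_w k w \is a fin_num := integrable_fin_num measurableT int2.
have D0 : \int[mu]_w D w = 0.
  by rewrite integralB //; [rewrite intcS_val Heq subee | exact: intcS].
have aeS := integrable_ae measurableT intS.
have aeK := integrable_ae measurableT int4.
have aeabs : ae_eq mu setT (fun w => `|D w|) D.
  apply: (filterS2 _ _ aeS aeK) => w hS hK _.
  by rewrite gee0_abs // /D sube_ge0 ?Kle // (hK Logic.I).
have absD0 : \int[mu]_w `|D w| = 0.
  rewrite (ae_eq_integral D) //; exact: measurableT_comp.
have aeD := (ae_eq_integral_abs mu measurableT mD).1 absD0.
have aeSK : {ae mu, forall w, S w \is a fin_num /\ K w \is a fin_num}.
  by apply: (filterS2 _ _ aeS aeK) => w hS hK; split; [exact: hS | exact: hK].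
have aeall : {ae mu, forall w, forall i, q (h i w) = Q w}.
  apply: (filterS2 _ _ aeSK aeD) => w [hS hK] hD i.
  apply: (J_eq i0 (p0 w) (fun i => q0 (h i w))) => //; exact: hD.
move=> i; apply: filterS aeall => w hw.
by rewrite (hw i) -(hw i0) hi0.
Qed.

Lemma KL_eq_of_inv : (forall i, {ae mu, forall w, q (h i w) = q w}) ->
  \int[mu]_w K w = \int[mu]_w k w.
Proof.
move=> H.
have H' : {ae mu, forall w, forall i, q (h i w) = q w} by apply: filter_forall.
rewrite (ae_eq_integral k) //; try exact: (measurable_int mu int4);
  try exact: (measurable_int mu int2).
apply: filterS H' => w hw _; rewrite /K /k /Q.
by rewrite (eq_bigr (fun _ => q w)) ?(avgr_const i0) // => i _; exact: hw.
Qed.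

End abstract.

Lemma sube_cancel (R : realType) (x a b : \bar R) :
  x \is a fin_num -> a \is a fin_num -> b \is a fin_num ->
  ((x - a = x - b)%E <-> a = b).
Proof.
move=> fx fa fb; split => [|->//].
rewrite -(fineK fx) -(fineK fa) -(fineK fb) -!EFinB => -[] /addrI /oppr_inj ->.
by [].
Qed.


Unset Implicit Arguments.

Theorem corollary4p2 (R : realType) (L : nat) (d : nat -> nat)
  (mu : {measure set (weight_space R L d) -> \bar R})
  (prior lik : weight_space R L d -> R)
  (Theta : Type) (q : Theta -> weight_space R L d -> R) :
  is_lebesgue mu ->
  is_density mu prior -> G_invariant mu prior ->
  measurable_fun setT lik -> (forall w, 0 <= lik w) ->
  (forall (g : group_G L d) w, lik (mlp_act g w) = lik w) ->
  (forall th, is_density mu (q th)) ->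
  (forall th, mu.-integrable setT (fun w => ((q th w)%:E * elog (lik w))%E)) ->
  (forall th, mu.-integrable setT (fun w => klterm (q th w) (prior w))) ->
  (forall th, mu.-integrable setT
     (fun w => ((symmetrize (q th) w)%:E * elog (lik w))%E)) ->
  (forall th, mu.-integrable setT
     (fun w => klterm (symmetrize (q th) w) (prior w))) ->
  forall th,
    (elbo mu lik prior (q th) <= elbo mu lik prior (symmetrize (q th)))%E /\
    (elbo mu lik prior (symmetrize (q th)) = elbo mu lik prior (q th)
       <-> G_invariant mu (q th)).
Proof.
move=> hleb [mp p0 _] pinv mlik lik0 likinv hq int1 int2 int3 int4 th.
have [mq q0 _] := hq th.
have int1' := int1 th; have int2' := int2 th; have int4' := int4 th.
have hE (g : group_G L d) : (fun w : weight_space R L d => mlp_act (ginv g) w) =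
    ptup (sigma_g (ginv g)).
  by apply/funext => w; rewrite mlp_act_ptup.
have mh : forall g : group_G L d, measurable_fun setT (fun w : weight_space R L d => mlp_act (ginv g) w).
  by move=> g; rewrite (hE g); exact: measurable_ptup.
have muh : forall (g : group_G L d) A, measurable A ->
    mu ((fun w : weight_space R L d => mlp_act (ginv g) w) @^-1` A) = mu A.
  by move=> g A mA; rewrite (hE g); apply: mu_ptup.
have hi0 : forall w, mlp_act (ginv (g1 L d)) w = w := @mlp_act_ginv_g1 _ _ _.
have pinv' : forall g : group_G L d, {ae mu, forall w, prior (mlp_act (ginv g) w) = prior w}.
  by move=> g; exact: pinv.
have liki : forall (g : group_G L d) w, lik (mlp_act (ginv g) w) = lik w.
  by move=> g w; exact: likinv.
have EE : expected_loglik mu lik (symmetrize (q th)) = expected_loglik mu lik (q th).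
  by apply: (E_eq (h := fun g w => mlp_act (ginv g) w) (g1 L d)).
have KLle : (KL mu (symmetrize (q th)) prior <= KL mu (q th) prior)%E.
  by apply: (KL_le (h := fun g w => mlp_act (ginv g) w) (g1 L d)).
have finE : expected_loglik mu lik (q th) \is a fin_num :=
  integrable_fin_num measurableT int1'.
have finK : KL mu (q th) prior \is a fin_num := integrable_fin_num measurableT int2'.
have finKG : KL mu (symmetrize (q th)) prior \is a fin_num :=
  integrable_fin_num measurableT int4'.
split.
  by rewrite /elbo EE; exact: leeB (lexx _) KLle.
rewrite /elbo EE sube_cancel //.
split.
- move=> Heq g.
  rewrite -[g in mlp_act g](ginvK g).
  apply: (KL_eq_inv (h := fun g w => mlp_act (ginv g) w) (i0 := g1 L d)); try done; [exact: hi0 | exact: mp].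
- move=> Hinv.
  apply: (KL_eq_of_inv (h := fun g w => mlp_act (ginv g) w) (p := prior) (q := q th) (g1 L d)) => //.
Qed.
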